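(* Let $F>1$ and $s>0$ be constants. Consider the self-adjusting $(1,\lambda)$ EA (defined in the context) with update strength $F$ and success rate $s$, using either standard bit mutation with mutation probability $p\in O(1/n)\cap n^{-O(1)}$ or the heavy-tailed mutation operator with a constant $\beta>1$, on an everywhere hard function $f$ with constant $\varepsilon$ (i.e. $p_{\max}=O(n^{-\varepsilon})$) and $d+1=n^{o(\log n)}$ function values, started with an arbitrary search point and arbitrary offspring population size $\lambda_0$. Let $\lambda_2:=n^{\varepsilon/2}$ and let $\tau$ be the first generation where $\lambda_\tau\ge\lambda_2$. Then $E[\tau]=O(\log\lambda_2)$, and during these $\tau$ generations the algorithm makes only $\lambda_0+O(\lambda_2\log\lambda_2)$ function evaluations in expectation.
   Context: Search space $\{0,1\}^n$; asymptotics with respect to $n\to\infty$. W.l.o.g. $f$ takes values in $\{0,\dots,d\}$ with global optima at value $d$. Self-adjusting $(1,\lambda)$ EA: maintains a search point $x$ and real-valued $\lambda$ (rounded to a nearest integer when needed); $\lambda_t$ is the value in generation $t$. Each generation creates $\lambda$ offspring independently by mutating $x$ (one evaluation each), picks an offspring $y$ of maximum fitness (ties uniformly at random), sets $x\leftarrow y$ in any case, and sets $\lambda\leftarrow\max\{1,\lambda/F\}$ if $f(y)>f(x)$ and $\lambda\leftarrow F^{1/s}\lambda$ otherwise. Standard bit mutation with probability $p$ flips each bit independently with probability $p$. Heavy-tailed mutation with $\beta>1$ draws $\chi\in\{1,\dots,n/2\}$ with $\Pr[\chi=i]=i^{-\beta}/\sum_{j=1}^{n/2}j^{-\beta}$ and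 then does standard bit mutation with probability $\chi/n$. $p_x^+$ is the probability that a single offspring of $x$ has strictly larger fitness than $x$; $p_{\max}:=\max\{p_x^+ : f(x)<d\}$. $f$ is everywhere hard if $p_{\max}=O(n^{-\varepsilon})$ for some constant $0<\varepsilon<1$. *)

(* Defs.v *)
From mathcomp Require Import all_boot all_order all_algebra.
From mathcomp Require Import reals exp.
Set Implicit Arguments. Unset Strict Implicit. Unset Printing Implicit Defensive.
Import Order.TTheory GRing.Theory Num.Theory.
Local Open Scope ring_scope.

Definition bitstring (n : nat) := {ffun 'I_n -> bool}.

Definition hamming n (x y : bitstring n) : nat := #|[set i | x i != y i]|.

Section EA.
Variable R : realType.

(* A mutation operator on {0,1}^n is given by its transition probabilities:
   mut x y = Pr[mutating x yields y]. *)
Definition mutation n := bitstring n -> bitstring n -> R.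

Definition sbm n (p : R) : mutation n :=
  fun x y => p ^+ hamming x y * (1 - p) ^+ (n - hamming x y).

Definition heavy_norm n (beta : R) : R :=
  \sum_(1 <= j < (n./2).+1) powR j%:R (- beta).
Definition heavy n (beta : R) : mutation n :=
  fun x y => \sum_(1 <= i < (n./2).+1)
     (powR i%:R (- beta) / heavy_norm n beta) * sbm (i%:R / n%:R) x y.

Definition p_plus n (mut : mutation n) (f : bitstring n -> nat) (x : bitstring n) : R :=
  \sum_(y | (f x < f y)%N) mut x y.

(* p_max := max { p_x^+ : f(x) < d }  (0 if there is no such x). *)
Definition p_max n (mut : mutation n) (f : bitstring n -> nat) (d : nat) : R :=
  \big[Num.max/0]_(x | (f x < d)%N) p_plus mut f x.

Definition round_lam (lam : R) : nat := Num.trunc (lam + 1 / 2).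

(* Probability that one generation of the (1,lambda) EA with k offspring,
   started at x, selects z as the new search point: the k offspring are
   i.i.d. according to mut x, and the selected offspring is uniform among the
   offspring of maximal fitness. *)
Definition select n (mut : mutation n) (f : bitstring n -> nat) (k : nat)
    (x z : bitstring n) : R :=
  \sum_(ys : {ffun 'I_k -> bitstring n})
     (\prod_(i < k) mut x (ys i)) *
     (if f z == \max_(i < k) f (ys i)
      then #|[set i | ys i == z]|%:R / #|[set i | f (ys i) == \max_(j < k) f (ys j)]|%:R
      else 0).

Definition lam_update (F s : R) (fx fz : nat) (lam : R) : R :=
  if (fx < fz)%N then Num.max 1 (lam / F) else powR F (1 / s) * lam.

(* Truncated expected accumulated cost.  exp_cost ... g lam2 T x lam is
   E[ sum_{t < min(tau, T)} g(lambda_t) ] for the self-adjusting (1,lambda) EA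
   started in search point x with lambda_0 = lam, where
   tau = min { t | lambda_t >= lam2 }.  By monotone convergence,
   E[ sum_{t < tau} g(lambda_t) ] = sup_T exp_cost ... T x lam. *)
Fixpoint exp_cost n (mut : mutation n) (f : bitstring n -> nat) (F s : R)
    (g : R -> R) (lam2 : R) (T : nat) (x : bitstring n) (lam : R) : R :=
  match T with
  | 0 => 0
  | T'.+1 =>
    if lam2 <= lam then 0
    else g lam + \sum_(z : bitstring n)
           select mut f (round_lam lam) x z *
           exp_cost mut f F s g lam2 T' z (lam_update F s (f x) (f z) lam)
  end.

End EA.

(* Main.v *)
Require Import Defs.
From mathcomp Require Import all_boot all_order all_algebra.
From mathcomp Require Import reals exp.
From mathcomp Require Import ring lra.
From mathcomp Require sequences.
Import Order.TTheory GRing.Theory Num.Theory.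
Local Open Scope ring_scope.

Section Sel.
Variables (R : realType) (n : nat) (f : bitstring n -> nat).

Definition inner k (ys : {ffun 'I_k -> bitstring n}) (z : bitstring n) : R :=
  if f z == \max_(i < k) f (ys i)
      then #|[set i | ys i == z]|%:R / #|[set i | f (ys i) == \max_(j < k) f (ys j)]|%:R
      else 0.

Lemma card_fib k (ys : {ffun 'I_k -> bitstring n}) (Q : pred (bitstring n)) :
  (\sum_(z | Q z) #|[set i | ys i == z]| = #|[set i | Q (ys i)]|)%N.
Proof.
rewrite -sum1_card (partition_big ys Q) /=; last by move=> i; rewrite inE.
apply: eq_bigr => z Qz; rewrite -sum1_card; apply: eq_bigl => i.
rewrite !inE; case: (ys i =P z) => [->|_]; by rewrite ?Qz ?andbF.
Qed.

Lemma inner_sum k (ys : {ffun 'I_k -> bitstring n}) (P : pred (bitstring n)) :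
  \sum_(z | P z) inner k ys z =
  #|[set i | P (ys i) && (f (ys i) == \max_(j < k) f (ys j))]|%:R /
     #|[set i | f (ys i) == \max_(j < k) f (ys j)]|%:R.
Proof.
rewrite /inner -big_mkcondr /= -mulr_suml -natr_sum.
by rewrite (card_fib k ys (fun z => P z && (f z == \max_(j < k) f (ys j)))).
Qed.

Lemma inner_ge0 k (ys : {ffun 'I_k -> bitstring n}) z : 0 <= @inner k ys z.
Proof. rewrite /inner; case: ifP => // _; by rewrite divr_ge0. Qed.

Lemma inner_le1 k (ys : {ffun 'I_k -> bitstring n}) (P : pred (bitstring n)) : \sum_(z | P z) @inner k ys z <= 1.
Proof.
rewrite inner_sum.
set a := #|_|; set b := #|_|.
have ab : (a <= b)%N by apply: subset_leq_card; apply/subsetP => i; rewrite !inE => /andP[].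
have [->|b0] := eqVneq b 0%N; first by rewrite invr0 mulr0.
by rewrite ler_pdivrMr ?ltr0n ?lt0n // mul1r ler_nat.
Qed.

Lemma inner_leP k (ys : {ffun 'I_k -> bitstring n}) (P : pred (bitstring n)) :
  \sum_(z | P z) @inner k ys z <= #|[set i | P (ys i)]|%:R.
Proof.
rewrite inner_sum.
set a := #|_|; set b := #|_|.
have ab : (a <= b)%N by apply: subset_leq_card; apply/subsetP => i; rewrite !inE => /andP[].
have ac : (a <= #|[set i | P (ys i)]|)%N by apply: subset_leq_card; apply/subsetP => i; rewrite !inE => /andP[].
have [->|b0] := eqVneq b 0%N; first by rewrite invr0 mulr0.
apply: le_trans (_ : a%:R <= _); last by rewrite ler_nat.
by rewrite ler_pdivrMr ?ltr0n ?lt0n // ler_peMr ?ler0n // ler1n lt0n.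
Qed.
End Sel.
Arguments inner {R n} f k ys z.
Arguments inner_sum {R n} f k ys P.
Arguments inner_ge0 {R n} f k ys z.
Arguments inner_le1 {R n} f k ys P.
Arguments inner_leP {R n} f k ys P.

Section Sel2.
Variables (R : realType) (n : nat) (mut : mutation R n) (f : bitstring n -> nat).
Hypothesis mut_ge0 : forall x y, 0 <= mut x y.
Hypothesis mut_mass : forall x, \sum_y mut x y <= 1.

Lemma sel_sumP k x (P : pred (bitstring n)) :
  \sum_(z | P z) select mut f k x z =
  \sum_(ys : {ffun 'I_k -> bitstring n}) (\prod_(i < k) mut x (ys i)) * \sum_(z | P z) inner f k ys z.
Proof.
rewrite /select exchange_big /=; apply: eq_bigr => ys _; by rewrite mulr_sumr.
Qed.

Lemma prod_ge0 k x (ys : {ffun 'I_k -> bitstring n}) : 0 <= \prod_(i < k) mut x (ys i).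
Proof. by apply: prodr_ge0 => i _. Qed.

Lemma sel_ge0 k x z : 0 <= select mut f k x z.
Proof. rewrite /select; apply: sumr_ge0 => ys _; apply: mulr_ge0; [exact: prod_ge0| exact: inner_ge0]. Qed.

Lemma prod_mass k x : \sum_(ys : {ffun 'I_k -> bitstring n}) \prod_(i < k) mut x (ys i) <= 1.
Proof.
rewrite -(bigA_distr_bigA (fun (i : 'I_k) y => mut x y)) /=.
apply: prodr_ile1 => i _; rewrite mut_mass andbT; exact: sumr_ge0.
Qed.

Lemma sel_mass k x (P : pred (bitstring n)) : \sum_(z | P z) select mut f k x z <= 1.
Proof.
rewrite sel_sumP; apply: le_trans (prod_mass k x).
apply: ler_sum => ys _; rewrite -[X in _ <= X]mulr1; apply: ler_wpM2l; first exact: prod_ge0.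
exact: inner_le1.
Qed.

Lemma card_sum k (ys : {ffun 'I_k -> bitstring n}) (P : pred (bitstring n)) :
  #|[set i | P (ys i)]|%:R = \sum_(i < k) (P (ys i))%:R :> R.
Proof.
rewrite -sum1_card natr_sum big_mkcond /=; apply: eq_bigr => i _; by rewrite inE; case: (P _).
Qed.

Lemma marg k x (P : pred (bitstring n)) (j : 'I_k) :
  \sum_(ys : {ffun 'I_k -> bitstring n}) (\prod_(i < k) mut x (ys i)) * (P (ys j))%:R
   <= \sum_(y | P y) mut x y.
Proof.
pose G (i : 'I_k) y := mut x y * (if i == j then (P y)%:R else 1).
have -> : \sum_(ys : {ffun 'I_k -> bitstring n}) (\prod_(i < k) mut x (ys i)) * (P (ys j))%:R
   = \sum_(ys : {ffun 'I_k -> bitstring n}) \prod_(i < k) G i (ys i).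
  apply: eq_bigr => ys _; rewrite /G big_split /=; congr (_ * _).
  rewrite (bigD1 j) //= eqxx big1 ?mulr1 // => i /negbTE ->; done.
rewrite -(bigA_distr_bigA G) (bigD1 j) //=.
have -> : \sum_y G j y = \sum_(y | P y) mut x y.
  rewrite /G eqxx [RHS]big_mkcond /=; apply: eq_bigr => y _; by case: (P y); rewrite ?mulr1 ?mulr0.
rewrite -[X in _ <= X]mulr1; apply: ler_wpM2l; first by apply: sumr_ge0.
apply: prodr_ile1 => i /negbTE ij.
have -> : \sum_y G i y = \sum_y mut x y by apply: eq_bigr => y _; rewrite /G ij mulr1.
by rewrite mut_mass andbT; apply: sumr_ge0.
Qed.

Lemma sel_succ k x (P : pred (bitstring n)) :
  \sum_(z | P z) select mut f k x z <= k%:R * \sum_(y | P y) mut x y.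
Proof.
rewrite sel_sumP.
apply: le_trans (_ : \sum_(ys : {ffun 'I_k -> bitstring n}) (\prod_(i < k) mut x (ys i)) * \sum_(i < k) (P (ys i))%:R <= _).
  apply: ler_sum => ys _; apply: ler_wpM2l; first exact: prod_ge0.
  rewrite -card_sum; exact: inner_leP.
under eq_bigr do rewrite mulr_sumr.
rewrite exchange_big /=.
have -> : k%:R * \sum_(y | P y) mut x y = \sum_(j < k) \sum_(y | P y) mut x y.
  by rewrite sumr_const card_ord mulr_natl.
by apply: ler_sum => j _; apply: marg.
Qed.
End Sel2.

Section Mut.
Variables (R : realType) (n : nat).

Lemma sbm_prod (p : R) (x y : bitstring n) :
  sbm p x y = \prod_(i < n) (if x i != y i then p else 1 - p).
Proof.
rewrite /sbm /hamming (bigID (fun i => x i != y i)) /=.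
rewrite (eq_bigr (fun=> p)); last by move=> i ->.
rewrite [X in _ = _ * X](eq_bigr (fun=> 1 - p)); last by move=> i /negbTE ->.
rewrite !prodr_const; congr (_ ^+ _ * _ ^+ _).
  by apply: eq_card => i; rewrite inE.
have := cardC [set i | x i != y i]; rewrite card_ord => {1}<-; rewrite addKn.
by apply: eq_card => i; rewrite !inE.
Qed.

Lemma sbm_mass (p : R) (x : bitstring n) : \sum_y sbm p x y = 1.
Proof.
under eq_bigr do rewrite sbm_prod.
rewrite -(bigA_distr_bigA (fun i b => if x i != b then p else 1 - p)) /=.
apply: big1 => i _; rewrite big_bool /=; case: (x i) => /=; rewrite addrC ?subrK ?addrNK //.
by rewrite addrC subrK.
Qed.

Lemma sbm_ge0 (p : R) (x y : bitstring n) : 0 <= p <= 1 -> 0 <= sbm p x y.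
Proof.
move=> /andP[p0 p1]; rewrite /sbm; apply: mulr_ge0; apply: exprn_ge0 => //.
by rewrite subr_ge0.
Qed.

Lemma heavy_mass (beta : R) (x : bitstring n) : \sum_y heavy beta x y <= 1.
Proof.
rewrite /heavy exchange_big /=.
under eq_bigr do rewrite -mulr_sumr sbm_mass mulr1.
rewrite -mulr_suml -/(heavy_norm n beta).
have [->|h0] := eqVneq (heavy_norm n beta) 0. by rewrite mul0r.
by rewrite divff.
Qed.

Lemma heavy_ge0 (beta : R) (x y : bitstring n) : 0 <= heavy beta x y.
Proof.
rewrite /heavy big_nat; apply: sumr_ge0 => i /andP[i1 i2].
apply: mulr_ge0.
  apply: divr_ge0; first exact: powR_ge0.
  rewrite /heavy_norm; apply: sumr_ge0 => j _; exact: powR_ge0.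
apply: sbm_ge0.
have iN : (i <= n)%N.
  apply: leq_trans (ltnSE i2) _; by rewrite leq_half_double -addnn leqW // leq_addr.
have n0 : (0 < n)%N by apply: leq_trans i1 iN.
rewrite divr_ge0 ?ler0n //= ler_pdivrMr ?ltr0n // mul1r ler_nat //.
Qed.
End Mut.

Section Main.
Variables (R : realType) (n : nat) (mut : mutation R n) (f : bitstring n -> nat) (d : nat).
Variables (F s L P : R).
Hypothesis mut_ge0 : forall x y, 0 <= mut x y.
Hypothesis mut_mass : forall x, \sum_y mut x y <= 1.
Hypothesis fd : forall x, (f x <= d)%N.
Hypothesis pP : forall x, (f x < d)%N -> p_plus mut f x <= P.
Hypothesis F1 : 1 < F.
Hypothesis s0 : 0 < s.
Hypothesis L1 : 1 <= L.

Definition cc := ln F / s.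
Definition AA := 2 / cc.
Definition dd := cc / (2 * (ln F + cc)).
Hypothesis LP : 2 * L * P <= dd.

Definition Psi lam := AA * Num.max 0 (ln L - ln lam + cc).

Lemma lnF_gt0 : 0 < ln F. Proof. exact: ln_gt0. Qed.
Lemma cc_gt0 : 0 < cc. Proof. by rewrite /cc divr_gt0 // lnF_gt0. Qed.
Lemma AA_gt0 : 0 < AA. Proof. by rewrite /AA divr_gt0 // cc_gt0. Qed.
Lemma dd_ge0 : 0 <= dd.
Proof.
have h1 := cc_gt0; have h2 := lnF_gt0.
rewrite /dd; apply: divr_ge0; first exact: ltW.
apply: mulr_ge0 => //; apply: addr_ge0; exact: ltW.
Qed.

Lemma Psi_ge0 lam : 0 <= Psi lam.
Proof. by rewrite /Psi mulr_ge0 ?le_max ?lexx // ltW // AA_gt0. Qed.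

Lemma main_cost T x lam : 1 <= lam ->
  exp_cost mut f F s (fun _ => 1) L T x lam <= Psi lam.
Proof.
elim: T x lam => [|T IH] x lam lam1 /=; first exact: Psi_ge0.
case: ifP => [_|]; first exact: Psi_ge0.
move/negbT; rewrite -ltNge => lamL.
have lam0 : 0 < lam by apply: lt_le_trans lam1.
have L0 : 0 < L by apply: lt_le_trans L1.
set u := ln L - ln lam.
have u0 : 0 < u by rewrite subr_gt0 ltr_ln ?posrE.
have cc0 := cc_gt0; have A0 := AA_gt0; have lF0 := lnF_gt0.
set K := AA * (ln F + cc).
set S := fun z : bitstring n => (f x < f z)%N.
set k := round_lam lam.
have step1 : \sum_z select mut f k x z *
    exp_cost mut f F s (fun=> 1) L T z (lam_update F s (f x) (f z) lam)
  <= \sum_z select mut f k x z * (AA * u + (S z)%:R * K).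
  apply: ler_sum => z _; apply: ler_wpM2l; first exact: sel_ge0.
  rewrite /lam_update /S; case: ifP => Sz.
  - apply: le_trans (IH _ _ _) _; first by rewrite le_max lexx.
    rewrite /Psi mul1r /K -mulrDr; apply: ler_wpM2l; first exact: ltW.
    rewrite ge_max; apply/andP; split.
      by rewrite ltW // addr_gt0 // addr_gt0.
    have F0 : 0 < F by apply: lt_trans F1.
    have : ln lam - ln F <= ln (Num.max 1 (lam / F)).
      have m0 : 0 < Num.max 1 (lam / F) by apply: lt_le_trans (_ : 0 < 1) _; rewrite ?le_max ?lexx.
      have q0 : 0 < lam / F by rewrite divr_gt0.
      by rewrite -ln_div ?posrE // ler_ln ?posrE // le_max lexx orbT.
    move=> H; rewrite /u; lra.
  - have a1 : 1 <= powR F (1 / s).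
      by rewrite -{1}(powRr0 F) ler_powR ?ltW // divr_gt0.
    apply: le_trans (IH _ _ _) _; first by rewrite (le_trans lam1) // ler_peMl // ltW.
    rewrite /Psi mul0r addr0; apply: ler_wpM2l; first exact: ltW.
    rewrite lnM ?posrE ?(lt_le_trans _ a1) // ln_powR.
    have -> : 1 / s * ln F = cc by rewrite /cc mul1r mulrC.
    rewrite ge_max ltW //= -/u.
    rewrite /u; lra.
have step2 : \sum_z select mut f k x z * (AA * u + (S z)%:R * K) =
    AA * u * \sum_z select mut f k x z + K * \sum_(z | S z) select mut f k x z.
  rewrite !mulr_sumr [X in _ = _ + X]big_mkcond -big_split /=.
  apply: eq_bigr => z _; case: (S z) => /=; rewrite ?mulr1n ?mulr0n; lra.
have q_le : \sum_(z | S z) select mut f k x z <= dd.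
  case: (ltnP (f x) d) => fxd.
  - apply: le_trans (sel_succ _ _ mut f mut_ge0 mut_mass k x S) _.
    have kb : k%:R <= 2 * L.
      have : k%:R <= lam + 1 / 2 by rewrite /k /round_lam truncn_le; lra.
      lra.
    have pp := pP x fxd.
    have pp0 : 0 <= p_plus mut f x by apply: sumr_ge0 => y _.
    apply: le_trans LP; rewrite -mulrA [X in _ <= X]mulrA; apply: ler_pM => //.
  - rewrite big_pred0 ?dd_ge0 // => z; rewrite /S; apply/negbTE; rewrite -leqNgt.
    exact: leq_trans (fd z) fxd.
have mass : \sum_z select mut f k x z <= 1 := sel_mass _ _ mut f mut_ge0 mut_mass k x xpredT.
have sel0 : 0 <= \sum_z select mut f k x z by apply: sumr_ge0 => z _; apply: sel_ge0.
apply: le_trans (lerD (lexx 1) step1) _; rewrite step2.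
have Kd : K * dd = 1.
  rewrite /K /AA /dd; field.
  by rewrite !gt_eqF // addr_gt0.
have Ac : AA * cc = 2 by rewrite /AA; field; rewrite gt_eqF.
have K0 : 0 <= K by rewrite /K mulr_ge0 // ltW // addr_gt0.
have h1 : AA * u * \sum_z select mut f k x z <= AA * u.
  by rewrite -[X in _ <= X]mulr1 ler_wpM2l // mulr_ge0 // ltW.
have h2 : K * \sum_(z | S z) select mut f k x z <= 1 by rewrite -Kd ler_wpM2l.
rewrite /Psi max_r; last by rewrite ltW // -/u addr_gt0.
rewrite -/u; lra.
Qed.

End Main.

Section CostG.
Variables (R : realType) (n : nat) (mut : mutation R n) (f : bitstring n -> nat).
Variables (F s L M : R) (g : R -> R).
Hypothesis mut_ge0 : forall x y, 0 <= mut x y.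
Hypothesis M0 : 0 <= M.
Hypothesis gM : forall lam, lam < L -> g lam <= M.

Lemma cost_g T x lam :
  exp_cost mut f F s g L T x lam <= M * exp_cost mut f F s (fun _ => 1) L T x lam.
Proof.
elim: T x lam => [|T IH] x lam /=; first by rewrite mulr0.
case: ifP => [_|]; first by rewrite mulr0.
move/negbT; rewrite -ltNge => lamL.
rewrite mulrDr mulr1 mulr_sumr; apply: lerD; first exact: gM.
apply: ler_sum => z _; rewrite mulrCA; apply: ler_wpM2l; first exact: sel_ge0.
exact: IH.
Qed.
End CostG.

Lemma p_plus_le_max (R : realType) n (mut : mutation R n) f d x :
  (f x < d)%N -> p_plus mut f x <= p_max mut f d.
Proof. by move=> h; rewrite /p_max (bigD1 x) //= le_max lexx. Qed.

Lemma round_le (R : realType) (lam L : R) : lam < L -> 1 <= L -> (round_lam lam)%:R <= 2 * L.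
Proof.
move=> lL L1; rewrite /round_lam.
case: (boolP (0 <= lam + 1 / 2)) => h.
  have := truncn_le (lam + 1/2); rewrite h => /idP H; lra.
have -> : Num.trunc (lam + 1 / 2) = 0%N.
  apply/truncn0Pn; apply: contra h => h1; apply: le_trans h1; lra.
rewrite mulr0n; lra.
Qed.

Lemma growth (R : realType) (eps : R) : 0 < eps -> forall M : R, exists N : nat,
  forall n, (N <= n)%N -> M <= powR n%:R (eps / 2).
Proof.
move=> e0 M; set M' := Num.max M 1.
have M'0 : 0 <= M' by rewrite le_max ler01 orbT.
exists (Num.trunc (powR M' (2 / eps))).+1 => n Nn.
have h1 : powR M' (2 / eps) <= n%:R.
  apply: le_trans (ltW (truncnS_gt _)) _; by rewrite ler_nat.
apply: le_trans (_ : M' <= _); first by rewrite le_max lexx.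
apply: le_trans (ge0_ler_powR _ _ _ h1).
- rewrite -powRrM (_ : 2 / eps * (eps / 2) = 1) ?powRr1 //; field; by rewrite gt_eqF.
- by rewrite divr_ge0 // ltW.
- by rewrite nnegrE powR_ge0.
- by rewrite nnegrE ler0n.
Qed.

Lemma dd_gt0 (R : realType) (F s : R) : 1 < F -> 0 < s -> 0 < dd R F s.
Proof.
move=> F1 s0; have h1 := cc_gt0 _ _ _ F1 s0; have h2 := lnF_gt0 _ _ F1.
by rewrite /dd divr_gt0 // mulr_gt0 // addr_gt0.
Qed.

Theorem lemma3p2 (R : realType) (F s eps : R)
    (mut : forall n : nat, mutation R n)
    (d : nat -> nat) (f : forall n : nat, bitstring n -> nat) :
  1 < F -> 0 < s -> 0 < eps < 1 ->
  ((exists p : nat -> R,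
      (forall n, 0 <= p n <= 1) /\
      (exists c : R, exists n0 : nat, forall n, (n0 <= n)%N -> p n <= c / n%:R) /\
      (exists k : R, exists n0 : nat, forall n, (n0 <= n)%N -> powR n%:R (- k) <= p n) /\
      (forall n x y, mut n x y = sbm (p n) x y))
   \/
   (exists beta : R, 1 < beta /\ forall n x y, mut n x y = heavy beta x y)) ->
  (forall n x, (f n x <= d n)%N) ->
  (forall n, exists x, f n x = d n) ->
  (exists C : R, exists n0 : nat, forall n, (n0 <= n)%N ->
      p_max (mut n) (f n) (d n) <= C * powR n%:R (- eps)) ->
  (forall delta : R, 0 < delta -> exists n0 : nat, forall n, (n0 <= n)%N ->
      (d n).+1%:R <= powR n%:R (delta * ln n%:R)) ->
  exists C : R, exists n0 : nat, 0 < C /\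
    forall n, (n0 <= n)%N ->
    forall (x0 : bitstring n) (lam0 : R), 1 <= lam0 ->
    forall T : nat,
      exp_cost (mut n) (f n) F s (fun _ => 1) (powR n%:R (eps / 2)) T x0 lam0
        <= C * ln (powR n%:R (eps / 2))
      /\
      exp_cost (mut n) (f n) F s (fun lam => (round_lam lam)%:R)
               (powR n%:R (eps / 2)) T x0 lam0
        <= lam0 + C * powR n%:R (eps / 2) * ln (powR n%:R (eps / 2)).
Proof.
move=> F1 s0 /andP[e0 e1] hmut fd _ [C0 [nC hC]] _.
have hm : forall n, (forall x y, 0 <= mut n x y) /\ (forall x, \sum_y mut n x y <= 1).
  move=> n; case: hmut => [[p [p01 [_ [_ hp]]]]|[beta [_ hb]]].
    split=> [x y|x]; rewrite ?hp; first exact: sbm_ge0.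
    by under eq_bigr do rewrite hp; rewrite sbm_mass.
  split=> [x y|x]; rewrite ?hb; first exact: heavy_ge0.
  by under eq_bigr do rewrite hb; apply: heavy_mass.
have cc0 := cc_gt0 _ _ _ F1 s0; have A0 := AA_gt0 _ _ _ F1 s0; have dd0 := dd_gt0 _ _ _ F1 s0.
set c := cc R F s; set A := AA R F s; set dl := dd R F s.
have [N HN] := growth _ _ e0 (Num.max (sequences.expR (1:R)) (Num.max 1 (2 * C0 / dl))).
set C1 := A * (1 + c).
exists (2 * C1), (maxn N nC); split.
  by rewrite mulr_gt0 // mulr_gt0 // addr_gt0.
move=> n; rewrite geq_max => /andP[nN nCn] x0 lam0 lam01 T.
set L := powR n%:R (eps / 2).
have LM := HN n nN; rewrite -/L !ge_max in LM.
case/and3P: LM => Le L1 LC.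
have L0 : 0 < L by apply: lt_le_trans L1.
have lnL1 : 1 <= ln L.
  by rewrite -(expRK 1) ler_ln ?posrE // expR_gt0.
have n0 : (0 < n)%N.
  rewrite lt0n; apply/negP => /eqP n0; move: L0; rewrite /L n0 powR0 ?ltxx //.
  by rewrite mulf_neq0 // ?gt_eqF // invr_gt0.
have [mg0 mm] := hm n.
set P := C0 * powR n%:R (- eps).
have LP : 2 * L * P <= dl.
  have LL : powR n%:R (- eps) = L^-1 * L^-1.
    rewrite /L -!powRN -powRD; last by rewrite pnatr_eq0 -lt0n n0 implybT.
    congr powR; lra.
  rewrite /P LL; have -> : 2 * L * (C0 * (L^-1 * L^-1)) = 2 * C0 / L by field; rewrite gt_eqF.
  rewrite ler_pdivrMr //; move: LC; rewrite ler_pdivrMr //; lra.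
have pP : forall x, (f n x < d n)%N -> p_plus (mut n) (f n) x <= P.
  move=> x h; apply: le_trans (p_plus_le_max _ _ _ _ _ _ h) _; exact: hC.
have E1 := main_cost _ _ _ _ _ _ _ _ _ mg0 mm (fd n) pP F1 s0 L1 LP T x0 lam0 lam01.
have E1' : exp_cost (mut n) (f n) F s (fun=> 1) L T x0 lam0 <= C1 * ln L.
  apply: le_trans E1 _; rewrite /Psi -/c -/A /C1 -mulrA; apply: ler_wpM2l; first exact: ltW.
  have l0 : 0 <= ln lam0 by apply: ln_ge0.
  rewrite ge_max; apply/andP; split.
    apply: mulr_ge0; [by rewrite addr_ge0 // ltW | by apply: le_trans lnL1].
  have : c <= c * ln L by rewrite ler_peMr // ltW.
  lra.
have C10 : 0 < C1 by rewrite /C1 mulr_gt0 // addr_gt0.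
have lnL0 : 0 <= ln L by apply: le_trans lnL1.
have Eg := cost_g _ _ (mut n) (f n) F s L (2 * L) (fun lam => (round_lam lam)%:R)
  mg0 (fun lam h => round_le _ _ _ h L1) T x0 lam0.
split.
  apply: le_trans E1' _.
  have : 0 <= C1 * ln L by rewrite mulr_ge0 // ltW.
  lra.
apply: le_trans Eg _.
have h : 2 * L * exp_cost (mut n) (f n) F s (fun=> 1) L T x0 lam0 <= 2 * L * (C1 * ln L).
  by rewrite ler_wpM2l // mulr_ge0 // ltW.
apply: le_trans h _.
lra.
Qed.
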